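(* Let $G$ be a graph with a vertex cover $X\subseteq V(G)$, $I=V(G)\setminus X$, $C\subseteq V(G)$, $\mathcal{B}=\{N_G[w]:w\in C\}$, and $k$ a positive integer. If $u,v\in I$ are distinct false twins with $N_G[u]\notin\mathcal{B}$ and $N_G[v]\notin\mathcal{B}$, then, with $G'=G-v$ and $\mathcal{B}'=\{N_{G'}[w]: w\in C\}$, we have NCTD$(\mathcal{B})\le k$ if and only if NCTD$(\mathcal{B}')\le k$.
   Context: $N_G(v)$ and $N_G[v]$ are the open and closed neighborhoods of $v$ in $G$; $u,v$ are false twins if $N(u)=N(v)$. A teaching map for $\mathcal{B}$ assigns to each $B\in\mathcal{B}$ a set $T(B)\subseteq V(G)$. A vertex $w$ distinguishes $B,B'$ if $w$ lies in exactly one of them. $T$ is non-clashing if for all distinct $B,B'\in\mathcal{B}$ some $w\in T(B)\cup T(B')$ distinguishes them; its size is $\max_{B\in\mathcal{B}}|T(B)|$. NCTD$(\mathcal{B})$ is the minimum size of a non-clashing teaching map for $\mathcal{B}$. *)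

(* Defs.v *)
From mathcomp Require Import all_boot.
Set Implicit Arguments. Unset Strict Implicit. Unset Printing Implicit Defensive.

(* A finite simple graph is given by a vertex type T (finite) and an edge
   relation e (assumed symmetric and irreflexive in the theorem).  A graph on
   vertex set V ⊆ T is the subgraph of (T, e) induced by V. *)

Definition nbhd (T : finType) (V : {set T}) (e : rel T) (w : T) : {set T} :=
  [set x in V | e w x].

Definition cnbhd (T : finType) (V : {set T}) (e : rel T) (w : T) : {set T} :=
  [set x in V | (x == w) || e w x].

Definition vertex_cover (T : finType) (e : rel T) (X : {set T}) : Prop :=
  forall x y, e x y -> (x \in X) || (y \in X).

Definition ball_family (T : finType) (V : {set T}) (e : rel T) (C : {set T})
  : {set {set T}} := [set cnbhd V e w | w in C].

Definition non_clashing (T : finType) (V : {set T}) (F : {set {set T}})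
  (TM : {ffun {set T} -> {set T}}) : bool :=
  [forall B in F, TM B \subset V] &&
  [forall B in F, forall B' in F,
     (B != B') ==> [exists w in TM B :|: TM B', (w \in B) (+) (w \in B')]].

Definition tm_size (T : finType) (F : {set {set T}})
  (TM : {ffun {set T} -> {set T}}) : nat := \max_(B in F) #|TM B|.

(* NCTD(F): minimum size of a non-clashing teaching map (a non-clashing map
   always exists, e.g. T(B) = V, so the default value #|T| is never the
   only candidate). *)
Definition NCTD (T : finType) (V : {set T}) (F : {set {set T}}) : nat :=
  \big[minn/#|T|]_(TM : {ffun {set T} -> {set T}} | non_clashing V F TM)
     tm_size F TM.

(* Main.v *)
Require Import Defs.
From mathcomp Require Import all_boot.

Lemma bigmin_le (I : eqType) (s : seq I) (P : pred I) (F : I -> nat) idx i0 :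
  i0 \in s -> P i0 -> \big[minn/idx]_(i <- s | P i) F i <= F i0.
Proof.
elim: s => [//|j s IH]; rewrite inE big_cons => /orP [/eqP <-|hs] hP.
  by rewrite hP geq_minl.
case: (P j); last exact: IH.
by rewrite geq_min (IH hs hP) orbT.
Qed.

Lemma NCTD_leP (T : finType) (V : {set T}) (F : {set {set T}}) k :
  (forall B, B \in F -> B \subset V) ->
  NCTD V F <= k <-> exists TM, non_clashing V F TM /\ tm_size F TM <= k.
Proof.
move=> sub; split; last first.
  move=> [TM [h1 h2]]; apply: leq_trans h2.
  exact: bigmin_le (mem_index_enum _) h1.
rewrite /NCTD.
apply: (big_ind (fun x => x <= k -> exists TM, non_clashing V F TM /\ tm_size F TM <= k)).
- move=> hT; exists [ffun _ => V]; split.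
    apply/andP; split; first by apply/forallP => B; apply/implyP => _; rewrite ffunE.
    apply/forallP => B; apply/implyP => hB; apply/forallP => B'; apply/implyP => hB'.
    apply/implyP => neq.
    have : ~~ [forall x, (x \in B) == (x \in B')].
      by apply: contra neq => /forallP h; apply/eqP/setP => x; apply/eqP/h.
    rewrite negb_forall => /existsP [x hx].
    apply/existsP; exists x; rewrite !ffunE setUid.
    apply/andP; split; last by case: (x \in B) (x \in B') hx => [] [].
    move: hx; case hxB: (x \in B); first by move=> _; apply: (subsetP (sub _ hB)).
    case hxB': (x \in B') => // _; exact: (subsetP (sub _ hB')).
  apply: leq_trans hT; apply/bigmax_leqP => B _; rewrite ffunE; exact: max_card.
- move=> x y hx hy; rewrite geq_min => /orP [/hx|/hy] //.
- by move=> TM h1 h2; exists TM.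
Qed.

Theorem lemma6 (T : finType) (e : rel T) (e_sym : symmetric e)
  (e_irr : irreflexive e) (X C : {set T}) (k : nat) (u v : T) :
  vertex_cover e X -> 0 < k ->
  u \in ~: X -> v \in ~: X -> u != v ->
  nbhd [set: T] e u = nbhd [set: T] e v ->
  cnbhd [set: T] e u \notin ball_family [set: T] e C ->
  cnbhd [set: T] e v \notin ball_family [set: T] e C ->
  (NCTD [set: T] (ball_family [set: T] e C) <= k <->
   NCTD ([set: T] :\ v) (ball_family ([set: T] :\ v) e C) <= k).
Proof.
move=> _ _ _ _ uv hN hu hv.
have uC : u \notin C by apply: contra hu => h; apply/imsetP; exists u.
have vC : v \notin C by apply: contra hv => h; apply/imsetP; exists v.
have keyw : forall w, w \in C -> (v \in cnbhd [set: T] e w) = (u \in cnbhd [set: T] e w).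
  move=> w hw; rewrite !inE.
  have -> : (v == w) = false by apply/eqP => E; rewrite E hw in vC.
  have -> : (u == w) = false by apply/eqP => E; rewrite E hw in uC.
  move/setP: hN => /(_ w); rewrite !inE => E.
  by move: E => /=; rewrite (e_sym w v) (e_sym w u) => ->.
set F := ball_family _ e C; set F' := ball_family _ e C.
have keyF : forall B, B \in F -> (v \in B) = (u \in B).
  by move=> B /imsetP [w hw ->]; apply: keyw.
have resF : forall w, cnbhd ([set: T] :\ v) e w = cnbhd [set: T] e w :\ v.
  by move=> w; apply/setP => x; rewrite !inE andbT.
have memF' : forall B', B' \in F' <-> exists2 B, B \in F & B' = B :\ v.
  move=> B'; split.
    by move=> /imsetP [w hw ->]; exists (cnbhd [set: T] e w); [apply/imsetP; exists w|].
  by move=> [B /imsetP [w hw ->] ->]; apply/imsetP; exists w.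
pose pre (S : {set T}) := S :|: (if u \in S then [set v] else set0).
have preK : forall B, B \in F -> pre (B :\ v) = B.
  move=> B hB; apply/setP => x; rewrite /pre inE in_setD1 /=.
  case: (eqVneq x v) => [->|xv] /=.
    by rewrite in_setD1 uv /= (keyF _ hB); case: (u \in B); rewrite ?inE ?eqxx ?in_set0.
  rewrite in_setD1 uv /=.
  by case: (u \in B); rewrite ?inE ?in_set0 ?(negbTE xv) ?orbF.
have subF : forall B, B \in F -> B \subset [set: T] by move=> *; apply: subsetT.
have subF' : forall B, B \in F' -> B \subset [set: T] :\ v.
  move=> B /memF' [B0 _ ->]; apply/subsetP => x; rewrite !in_setD1 => /andP [-> _]; by rewrite in_setT.
split => H; [apply/(NCTD_leP _ _ _ k subF'); move/(NCTD_leP _ _ _ k subF): H | apply/(NCTD_leP _ _ _ k subF); move/(NCTD_leP _ _ _ k subF'): H].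
- move=> [TM [/andP [_ /forallP nc] sz]].
  pose g x := if x == v then u else x.
  exists [ffun B' => g @: TM (pre B')]; split.
    apply/andP; split.
      apply/forallP => B'; apply/implyP => _; rewrite ffunE.
      apply/subsetP => y /imsetP [x _ ->]; rewrite !inE andbT /g.
      by case: (eqVneq x v) => // _; rewrite eq_sym.
    apply/forallP => B1'; apply/implyP => /memF' [B1 h1 ->].
    apply/forallP => B2'; apply/implyP => /memF' [B2 h2 ->].
    apply/implyP => neq.
    have neq0 : B1 != B2 by apply: contra neq => /eqP ->.
    move: (nc B1); rewrite h1 /= => /forallP /(_ B2); rewrite h2 neq0 /=.
    move=> /existsP [x /andP [hx hxor]].
    apply/existsP; exists (g x); rewrite !ffunE !preK //.
    apply/andP; split.
      by move: hx; rewrite !inE => /orP [h|h]; apply/orP; [left|right]; apply/imsetP; exists x.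
    rewrite !inE /g; case: (eqVneq x v) => [E|xv].
      by rewrite uv /= -(keyF _ h1) -(keyF _ h2) -E.
    by rewrite xv.
  apply/bigmax_leqP => B' /memF' [B hB ->]; rewrite ffunE preK //.
  apply: leq_trans (leq_imset_card _ _) _.
  apply: leq_trans sz; exact: leq_bigmax_cond.
- move=> [TM [/andP [tsub /forallP nc] sz]].
  exists [ffun B => TM (B :\ v)]; split.
    apply/andP; split.
      by apply/forallP => B; apply/implyP => _; apply: subsetT.
    apply/forallP => B1; apply/implyP => h1.
    apply/forallP => B2; apply/implyP => h2.
    apply/implyP => neq.
    have h1' : B1 :\ v \in F' by apply/memF'; exists B1.
    have h2' : B2 :\ v \in F' by apply/memF'; exists B2.
    have neq0 : B1 :\ v != B2 :\ v.
      by apply: contra neq => /eqP E; rewrite -(preK _ h1) -(preK _ h2) E.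
    move: (nc (B1 :\ v)); rewrite h1' /= => /forallP /(_ (B2 :\ v)); rewrite h2' neq0 /=.
    move=> /existsP [x /andP [hx hxor]].
    have xv : x != v.
      move: hx; rewrite inE => /orP [] h.
        by move: (tsub); move/forallP/(_ (B1 :\ v)); rewrite h1' => /subsetP /(_ x h); rewrite !inE => /andP [].
      by move: (tsub); move/forallP/(_ (B2 :\ v)); rewrite h2' => /subsetP /(_ x h); rewrite !inE => /andP [].
    apply/existsP; exists x; rewrite !ffunE hx /=.
    by move: hxor; rewrite !inE xv.
  apply/bigmax_leqP => B hB; rewrite ffunE.
  apply: leq_trans sz; apply: leq_bigmax_cond; apply/memF'; exists B => //.
Qed.
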